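(* Let $S\subseteq\Sigma^n$ be a complementable double-code and $i,i'\in[n]$. Then $\backslash_i\backslash_{i'}S=\backslash_{i'}\backslash_i S$.
   Context: Let $\Sigma=\{0,1,2,3\}$, $[n]=\{1,\ldots,n\}$. An $i$-line of $\Sigma^n$ is a set of the four words that agree in all coordinates except the $i$th; a line is an $i$-line for some $i$. A double-code is a set meeting every line in $0$ or $2$ elements; a double-MDS-code is a set meeting every line in exactly $2$ elements; a double-code is complementable if contained in a double-MDS-code. For $S\subseteq\Sigma^n$ and $i\in[n]$, $\mathcal E_i(S)$ is the union of all $i$-lines that meet $S$, and $\backslash_i S=\mathcal E_i(S)\setminus S$. *)

(* Defs.v *)
From mathcomp Require Import all_boot.
Set Implicit Arguments. Unset Strict Implicit. Unset Printing Implicit Defensive.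

(* Alphabet Sigma = {0,1,2,3} is 'I_4; coordinates [n] = {1..n} are 'I_n (0-based). *)
Definition word (n : nat) := {ffun 'I_n -> 'I_4}.

Definition iline (n : nat) (i : 'I_n) (x : word n) : {set word n} :=
  [set y : word n | [forall j : 'I_n, (j != i) ==> (y j == x j)]].

Definition is_line (n : nat) (L : {set word n}) : Prop :=
  exists (i : 'I_n) (x : word n), L = iline i x.

Definition double_code (n : nat) (S : {set word n}) : Prop :=
  forall L : {set word n}, is_line L -> #|L :&: S| = 0 \/ #|L :&: S| = 2.

Definition double_MDS_code (n : nat) (S : {set word n}) : Prop :=
  forall L : {set word n}, is_line L -> #|L :&: S| = 2.

Definition complementable (n : nat) (S : {set word n}) : Prop :=
  double_code S /\ exists M : {set word n}, double_MDS_code M /\ S \subset M.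

Definition ext (n : nat) (i : 'I_n) (S : {set word n}) : {set word n} :=
  \bigcup_(x : word n | iline i x :&: S != set0) iline i x.

Definition bsl (n : nat) (i : 'I_n) (S : {set word n}) : {set word n} :=
  ext i S :\: S.

(* Main.v *)
Require Import Defs.
From mathcomp Require Import all_boot.
Set Implicit Arguments. Unset Strict Implicit. Unset Printing Implicit Defensive.

Section Card.
Variable T : finType.

Lemma card2_other (P : {set T}) u : #|P| = 2 -> u \in P -> exists2 v, v != u & v \in P.
Proof.
move=> hc hu.
have h1 : #|P :\ u| == 1 by move: hc; rewrite (cardsD1 u) hu add1n => -[->].
case/cards1P: h1 => v hv.
have : v \in P :\ u by rewrite hv set11.
by rewrite in_setD1 => /andP[]; exists v.
Qed.

Lemma card2_ex (P : {set T}) : #|P| = 2 -> exists u, u \in P.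
Proof.
move=> hc; have : 0 < #|P| by rewrite hc.
by rewrite card_gt0 => /set0Pn.
Qed.

Lemma no_three (P : {set T}) u v w : #|P| <= 2 -> u \in P -> v \in P -> w \in P ->
  u != v -> u != w -> v != w -> False.
Proof.
move=> hc hu hv hw uv uw vw.
have h3 : #|[:: u; v; w]| = 3.
  by apply/card_uniqP; rewrite /= !inE !negb_or uv uw vw.
have : [:: u; v; w] \subset P.
  by apply/subsetP => z; rewrite !inE => /or3P[]/eqP->.
move/subset_leq_card; rewrite h3 => h.
by have := leq_trans h hc.
Qed.

Lemma card2_sub (P Q : {set T}) y : #|P| = 2 -> #|Q| = 2 -> P \subset Q -> y \in Q -> y \in P.
Proof.
move=> hp hq hs; have e : #|P| = #|Q| by rewrite hp hq.
by move: hs => /(subset_cardP e) ->.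
Qed.
End Card.

Lemma five_distinct (x1 x2 x3 x4 x5 : 'I_4) :
  x1 != x2 -> x1 != x3 -> x1 != x4 -> x1 != x5 -> x2 != x3 -> x2 != x4 -> x2 != x5 ->
  x3 != x4 -> x3 != x5 -> x4 != x5 -> False.
Proof.
move=> h12 h13 h14 h15 h23 h24 h25 h34 h35 h45.
have : uniq [:: x1; x2; x3; x4; x5] by rewrite /= !inE !negb_or h12 h13 h14 h15 h23 h24 h25 h34 h35 h45.
move/card_uniqP => h. have := max_card [mem [:: x1;x2;x3;x4;x5]].
by rewrite card_ord h.
Qed.

Definition LHS (A : 'I_4 -> 'I_4 -> bool) a0 b0 : Prop :=
  (exists a, (exists b, A a b) /\ ~~ A a b0) /\ ~ ((exists b, A a0 b) /\ ~~ A a0 b0).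

Lemma LHS_ext (A B : 'I_4 -> 'I_4 -> bool) a0 b0 : (forall a b, A a b = B a b) ->
  LHS A a0 b0 -> LHS B a0 b0.
Proof.
move=> e [[a1 [[b1 h1] h2]] h3]; split.
  by exists a1; split; [exists b1; rewrite -e | rewrite -e].
by case=> [[b2 hb] hn]; apply: h3; split; [exists b2; rewrite e | rewrite e].
Qed.

Section Plane.
Variables (A M : 'I_4 -> 'I_4 -> bool).
Hypothesis hr : forall a, #|[set b | A a b]| = 0 \/ #|[set b | A a b]| = 2.
Hypothesis hc : forall b, #|[set a | A a b]| = 0 \/ #|[set a | A a b]| = 2.
Hypothesis mr : forall a, #|[set b | M a b]| = 2.
Hypothesis mc : forall b, #|[set a | M a b]| = 2.
Hypothesis sub : forall a b, A a b -> M a b.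

Lemma rowA2 a b : A a b -> #|[set b | A a b]| = 2.
Proof.
move=> h; case: (hr a) => // /eqP; rewrite cards_eq0 => /eqP e.
have : b \in [set b | A a b] by rewrite inE.
by rewrite e inE.
Qed.

Lemma colA2 a b : A a b -> #|[set a | A a b]| = 2.
Proof.
move=> h; case: (hc b) => // /eqP; rewrite cards_eq0 => /eqP e.
have : a \in [set a | A a b] by rewrite inE.
by rewrite e inE.
Qed.

Lemma rowle a : #|[set b | A a b]| <= 2.
Proof. by case: (hr a) => ->. Qed.

Lemma rowAM a b c : A a b -> M a c -> A a c.
Proof.
move=> h hm.
have : c \in [set b | A a b].
  apply: (card2_sub (rowA2 h) (mr a)); last by rewrite inE.
  by apply/subsetP => z; rewrite !inE; apply: sub.
by rewrite inE.
Qed.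

Lemma dir a0 b0 : LHS A a0 b0 -> LHS (fun a b => A b a) b0 a0.
Proof.
case=> [[a [[b' hab'] hab0]] hn].
have nb0b' : b0 != b' by apply/eqP => e; rewrite e hab' in hab0.
case: (boolP (A a0 b0)) => h00.
- split; last by case=> _ /negP.
  have mb' : b' \in [set b | A a b] by rewrite inE.
  have [b'' nb hb''] := card2_other (rowA2 hab') mb'.
  rewrite inE in hb''.
  case: (boolP (A a0 b')) => h0b'.
  + exists b''; split; first by exists a.
    apply/negP => h0b''.
    have nb0b'' : b0 != b'' by apply/eqP => e; rewrite e hb'' in hab0.
    have m0 : b0 \in [set b | A a0 b] by rewrite inE.
    have m1 : b' \in [set b | A a0 b] by rewrite inE.
    have m2 : b'' \in [set b | A a0 b] by rewrite inE.
    by apply: (no_three (rowle a0) m0 m1 m2 nb0b' nb0b''); rewrite eq_sym.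
  + by exists b'; split; first by exists a.
- have row0 : forall b, ~~ A a0 b.
    by move=> b; apply/negP => h; apply: hn; split => //; exists b.
  split.
    by exists b'; split; [exists a | apply: row0].
  case=> [[a1 ha1] _].
  have m1 : a1 \in [set a | A a b0] by rewrite inE.
  have [a2 na2 ha2] := card2_other (colA2 ha1) m1.
  rewrite inE in ha2.
  have [c hc0] := card2_ex (mr a0). rewrite inE in hc0.
  have m0 : a0 \in [set a | M a c] by rewrite inE.
  have [a' na' ha'] := card2_other (mc c) m0.
  rewrite inE in ha'.
  have n01 : a0 != a1 by apply/eqP => e; rewrite -e in ha1; move: (row0 b0); rewrite ha1.
  have n02 : a0 != a2 by apply/eqP => e; rewrite -e in ha2; move: (row0 b0); rewrite ha2.
  have n0a : a0 != a by apply/eqP => e; rewrite -e in hab'; move: (row0 b'); rewrite hab'.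
  have n1a : a1 != a by apply/eqP => e; rewrite -e ha1 in hab0.
  have n2a : a2 != a by apply/eqP => e; rewrite -e ha2 in hab0.
  have hrow : exists b, A a' b.
    case: (eqVneq a' a1) => [->|m1']; first by exists b0.
    case: (eqVneq a' a2) => [->|m2']; first by exists b0.
    case: (eqVneq a' a) => [->|m3']; first by exists b'.
    exfalso; apply: (@five_distinct a0 a1 a2 a a' n01 n02 n0a _ _ n1a _ n2a _ _);
      by rewrite eq_sym.
  case: hrow => b hb.
  have ha'c := rowAM hb ha'.
  have m' : a' \in [set a | A a c] by rewrite inE.
  have [a'' na'' ha''] := card2_other (colA2 ha'c) m'.
  rewrite inE in ha''.
  have n0'' : a0 != a'' by apply/eqP => e; rewrite -e in ha''; move: (row0 c); rewrite ha''.
  have k0 : a0 \in [set a | M a c] by rewrite inE.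
  have k1 : a' \in [set a | M a c] by rewrite inE.
  have k2 : a'' \in [set a | M a c] by rewrite inE; apply: sub.
  by apply: (no_three _ k0 k1 k2 _ n0'' _); rewrite ?mc // eq_sym.
Qed.
End Plane.

Section Words.
Variable n : nat.
Implicit Types (x y z : word n) (i j : 'I_n) (T : {set word n}).

Lemma iline_refl i y : y \in iline i y.
Proof. by rewrite inE; apply/forallP => k; apply/implyP. Qed.

Lemma iline_sym i y z : z \in iline i y -> y \in iline i z.
Proof.
rewrite !inE => /forallP h; apply/forallP => k; apply/implyP => hk.
by move/implyP: (h k) => /(_ hk) /eqP ->.
Qed.

Lemma iline_trans i y z w : z \in iline i y -> w \in iline i z -> w \in iline i y.
Proof.
rewrite !inE => /forallP h1 /forallP h2; apply/forallP => k; apply/implyP => hk.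
move/implyP: (h1 k) => /(_ hk) /eqP <-.
by move/implyP: (h2 k) => /(_ hk).
Qed.

Lemma ext_mem i T y : y \in ext i T <-> exists2 z, z \in iline i y & z \in T.
Proof.
split.
- case/bigcupP => w hw hy; case/set0Pn: hw => z; rewrite inE => /andP[hz hT].
  exists z => //; apply: iline_trans (iline_sym hy) hz.
- case=> z hz hT; apply/bigcupP; exists y; last by apply: iline_refl.
  by apply/set0Pn; exists z; rewrite inE hz hT.
Qed.

Definition pt i j x (a b : 'I_4) : word n :=
  [ffun k => if k == i then a else if k == j then b else x k].

Lemma pt_swap i j x a b : i != j -> pt i j x a b = pt j i x b a.
Proof.
move=> hij; apply/ffunP => k; rewrite !ffunE.
case: (eqVneq k i) => [->|nki]; first by rewrite (negbTE hij).
by case: (k == j).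
Qed.

Lemma iline_pt i j x a b z : i != j -> z \in iline i (pt i j x a b) ->
  exists a', z = pt i j x a' b.
Proof.
move=> hij; rewrite inE => /forallP h; exists (z i).
apply/ffunP => k; rewrite ffunE; case: (eqVneq k i) => [->//|nki].
by move/implyP: (h k) => /(_ nki) /eqP ->; rewrite ffunE (negbTE nki).
Qed.

Lemma pt_iline i j x a a' b : pt i j x a' b \in iline i (pt i j x a b).
Proof.
rewrite inE; apply/forallP => k; apply/implyP => nki.
by rewrite !ffunE (negbTE nki).
Qed.

Lemma pt_inj i j x b : injective (fun a => pt i j x a b).
Proof.
move=> a1 a2 /= e; have := congr1 (fun f : word n => f i) e.
by rewrite !ffunE eqxx.
Qed.

Lemma card_line i j x a b T : i != j ->
  #|iline i (pt i j x a b) :&: T| = #|[set a' | pt i j x a' b \in T]|.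
Proof.
move=> hij.
have -> : iline i (pt i j x a b) :&: T = (fun a' => pt i j x a' b) @: [set a' | pt i j x a' b \in T].
  apply/setP => z; rewrite inE; apply/andP/imsetP.
  - case=> hz hT; case: (iline_pt hij hz) => a' e; subst z.
    by exists a'; rewrite ?inE.
  - case=> a' ha' ->; split; first by apply: pt_iline.
    by rewrite inE in ha'.
by rewrite card_imset //; apply: pt_inj.
Qed.

Lemma memb i j x S a0 b0 : i != j ->
  pt i j x a0 b0 \in bsl i (bsl j S) <-> LHS (fun a b => pt i j x a b \in S) a0 b0.
Proof.
move=> hij; have hji : j != i by rewrite eq_sym.
have E1 : forall a b, pt i j x a b \in bsl j S <->
    (exists b', pt i j x a b' \in S) /\ pt i j x a b \notin S.
  move=> a b; rewrite /bsl in_setD; split.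
  - case/andP => hn /ext_mem [z hz hS].
    rewrite (pt_swap _ _ _ hij) in hz.
    case: (iline_pt hji hz) => b' e; subst z.
    by split => //; exists b'; rewrite (pt_swap _ _ _ hij).
  - case=> [[b' hb'] hn]; apply/andP; split => //; apply/ext_mem.
    by exists (pt i j x a b') => //; rewrite !(pt_swap _ _ _ hij); apply: pt_iline.
rewrite /LHS /=; split.
- rewrite /bsl in_setD => /andP[hn /ext_mem [z hz hT]].
  case: (iline_pt hij hz) => a e; subst z.
  split; first by exists a; apply/E1.
  by move=> H; apply: (negP hn); rewrite -/(bsl j S); apply/E1.
- case=> [[a ha] hneg]; rewrite /bsl in_setD; apply/andP; split.
    by apply/negP => /E1.
  by apply/ext_mem; exists (pt i j x a b0); [apply: pt_iline | apply/E1].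
Qed.
End Words.

Lemma col_code n (i j : 'I_n) x (T : {set word n}) (P : nat -> Prop) b : i != j ->
  (forall L, is_line L -> P #|L :&: T|) -> P #|[set a | pt i j x a b \in T]|.
Proof.
move=> hij H; rewrite -(card_line x b b T hij); apply: H; by exists i, (pt i j x b b).
Qed.

Lemma row_code n (i j : 'I_n) x (T : {set word n}) (P : nat -> Prop) a : i != j ->
  (forall L, is_line L -> P #|L :&: T|) -> P #|[set b | pt i j x a b \in T]|.
Proof.
move=> hij H.
have -> : [set b | pt i j x a b \in T] = [set b | pt j i x b a \in T].
  by apply: eq_finset => b; rewrite (pt_swap _ _ _ hij).
by apply: col_code => //; rewrite eq_sym.
Qed.

Lemma key n (S M : {set word n}) (i j : 'I_n) y :
  double_code S -> double_MDS_code M -> S \subset M -> i != j ->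
  y \in bsl i (bsl j S) -> y \in bsl j (bsl i S).
Proof.
move=> dc mds sub hij.
have hji : j != i by rewrite eq_sym.
have ey : y = pt i j y (y i) (y j).
  apply/ffunP => k; rewrite ffunE.
  case: (eqVneq k i) => [->//|_]; case: (eqVneq k j) => [->//|_] //.
have ey' : y = pt j i y (y j) (y i) by rewrite -(pt_swap _ _ _ hij).
move=> hy; rewrite ey'; apply/(@memb n j i y S (y j) (y i) hji).
have hL : LHS (fun a b => pt i j y a b \in S) (y i) (y j) by apply/(@memb n i j y S (y i) (y j) hij); rewrite -ey.
apply: (LHS_ext (A := fun a b => pt i j y b a \in S)).
  by move=> a b; rewrite /= (pt_swap _ _ _ hij).
have h1 : forall a, #|[set b | pt i j y a b \in S]| = 0 \/ #|[set b | pt i j y a b \in S]| = 2.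
  by move=> a; exact: (@row_code n i j y S (fun k => k = 0 \/ k = 2) a hij dc).
have h2 : forall b, #|[set a | pt i j y a b \in S]| = 0 \/ #|[set a | pt i j y a b \in S]| = 2.
  by move=> b; exact: (@col_code n i j y S (fun k => k = 0 \/ k = 2) b hij dc).
have h3 : forall a, #|[set b | pt i j y a b \in M]| = 2.
  by move=> a; exact: (@row_code n i j y M (fun k => k = 2) a hij mds).
have h4 : forall b, #|[set a | pt i j y a b \in M]| = 2.
  by move=> b; exact: (@col_code n i j y M (fun k => k = 2) b hij mds).
have h5 : forall a b, pt i j y a b \in S -> pt i j y a b \in M.
  by move=> a b; apply: (subsetP sub).
exact: (dir h1 h2 h3 h4 h5 hL).
Qed.

Theorem proposition6 (n : nat) (S : {set word n}) (i i' : 'I_n) :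
  complementable S -> bsl i (bsl i' S) = bsl i' (bsl i S).
Proof.
move=> [dc [M [mds sub]]].
case: (eqVneq i i') => [-> //|hii'].
apply/setP => y; apply/idP/idP.
- by apply: (@key n S M i i') => //.
- by apply: (@key n S M i' i) => //; rewrite eq_sym.
Qed.
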